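(* The variety $\mathsf{V}(S_{(4,467)})$ is the ai-semiring variety defined by the identities $xy\approx yx$, $x^2y\approx xy$, $x^2\approx x^2+x$, $x+xyz\approx x+xyz+xy$, $x_1x_2+x_3x_4\approx x_1x_2+x_3x_4+x_1x_2x_3x_4$.
   Context: An ai-semiring is an algebra $(S,+,\cdot)$ with $(S,+)$ a semilattice, $(S,\cdot)$ a semigroup, and both distributive laws. $\mathsf{V}(S)$ is the variety generated by $S$; ''the ai-semiring variety defined by identities $\Sigma$'' is the class of all ai-semirings satisfying $\Sigma$. $S_{(4,467)}$ has carrier $\{1,2,3,4\}$; addition: $x+x=x$, $2+x=x$, $1+x=1$ for all $x$, $3+4=1$; multiplication (row $a$, column $b$ gives $a\cdot b$): row $1$: $1,3,3,1$; row $2$: $3,2,3,3$; row $3$: $3,3,3,3$; row $4$: $1,3,3,1$. *)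

(* Defs.v *)
Record aisemiring {T : Type} (add mul : T -> T -> T) : Prop := {
  ai_add_assoc : forall x y z, add x (add y z) = add (add x y) z;
  ai_add_comm  : forall x y, add x y = add y x;
  ai_add_idem  : forall x, add x x = x;
  ai_mul_assoc : forall x y z, mul x (mul y z) = mul (mul x y) z;
  ai_distr_l   : forall x y z, mul x (add y z) = add (mul x y) (mul x z);
  ai_distr_r   : forall x y z, mul (add x y) z = add (mul x z) (mul y z)
}.

Inductive S4 : Type := e1 | e2 | e3 | e4.

Definition S4add (a b : S4) : S4 :=
  match a, b with
  | e1, _ => e1
  | _, e1 => e1
  | e2, x => x
  | x, e2 => x
  | e3, e3 => e3
  | e4, e4 => e4
  | e3, e4 => e1
  | e4, e3 => e1
  end.

Definition S4mul (a b : S4) : S4 :=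
  match a, b with
  | e1, e1 => e1 | e1, e2 => e3 | e1, e3 => e3 | e1, e4 => e1
  | e2, e1 => e3 | e2, e2 => e2 | e2, e3 => e3 | e2, e4 => e3
  | e3, _ => e3
  | e4, e1 => e1 | e4, e2 => e3 | e4, e3 => e3 | e4, e4 => e1
  end.

(** Membership in the variety V(S_(4,467)) = HSP(S_(4,467)):
    (T,add,mul) is a homomorphic image of a subalgebra of a direct power
    S4^I (for some index type I). *)
Definition InV_S4 {T : Type} (add mul : T -> T -> T) : Prop :=
  exists (I : Type) (P : (I -> S4) -> Prop)
         (Padd : forall f g, P f -> P g -> P (fun i => S4add (f i) (g i)))
         (Pmul : forall f g, P f -> P g -> P (fun i => S4mul (f i) (g i)))
         (h : {f : I -> S4 | P f} -> T),
    (forall t : T, exists u, h u = t) /\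
    (forall u v : {f : I -> S4 | P f},
        h (exist _ _ (Padd _ _ (proj2_sig u) (proj2_sig v)))
          = add (h u) (h v)) /\
    (forall u v : {f : I -> S4 | P f},
        h (exist _ _ (Pmul _ _ (proj2_sig u) (proj2_sig v)))
          = mul (h u) (h v)).

Definition satisfies_Sigma {T : Type} (add mul : T -> T -> T) : Prop :=
  (forall x y, mul x y = mul y x) /\
  (forall x y, mul (mul x x) y = mul x y) /\
  (forall x, mul x x = add (mul x x) x) /\
  (forall x y z, add x (mul (mul x y) z)
                 = add (add x (mul (mul x y) z)) (mul x y)) /\
  (forall x1 x2 x3 x4,
      add (mul x1 x2) (mul x3 x4)
      = add (add (mul x1 x2) (mul x3 x4)) (mul (mul (mul x1 x2) x3) x4)).

(* Main.v *)
Require Import Defs.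
From Stdlib Require Import List Classical ClassicalEpsilon FunctionalExtensionality ProofIrrelevance.
Import ListNotations.

Fixpoint lprod {X : Type} (op : X -> X -> X) (x : X) (l : list X) : X :=
  match l with nil => x | y :: l' => op x (lprod op y l') end.

Lemma lprod_app {X} (op : X -> X -> X)
  (assoc : forall a b c, op a (op b c) = op (op a b) c) :
  forall l x y k, lprod op x (l ++ y :: k) = op (lprod op x l) (lprod op y k).
Proof. induction l as [|z l IH]; intros x y k; simpl; auto.
  rewrite IH, assoc; reflexivity. Qed.

Lemma lprod_all {X} (op : X -> X -> X) (R : X -> Prop)
  (HR : forall a b, R a -> R b -> R (op a b)) :
  forall l x, (forall y, In y (x :: l) -> R y) -> R (lprod op x l).
Proof. induction l as [|z l IH]; intros x H; simpl.
  - apply H; left; auto.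
  - apply HR. apply H; left; auto. apply IH. intros y Hy; apply H; right; exact Hy. Qed.

Lemma lprod_ideal {X} (op : X -> X -> X) (Q : X -> Prop)
  (HQ1 : forall a b, Q a -> Q (op a b)) (HQ2 : forall a b, Q b -> Q (op a b)) :
  forall l x y, In y (x :: l) -> Q y -> Q (lprod op x l).
Proof. induction l as [|z l IH]; intros x y Hy Qy; simpl.
  - destruct Hy as [Hy|[]]; subst; auto.
  - destruct Hy as [Hy|Hy]; [subst; apply HQ1; auto | apply HQ2; exact (IH z y Hy Qy)]. Qed.

Section Semilattice.
Variable X : Type. Variable add : X -> X -> X.
Hypothesis aA : forall x y z, add x (add y z) = add (add x y) z.
Hypothesis aC : forall x y, add x y = add y x.
Hypothesis aI : forall x, add x x = x.
Definition le (a b : X) := add a b = b.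
Lemma le_refl a : le a a. Proof. apply aI. Qed.
Lemma le_trans a b c : le a b -> le b c -> le a c.
Proof. unfold le; intros H1 H2. rewrite <- H2, aA, H1; reflexivity. Qed.
Lemma le_addl a b : le a (add a b). Proof. unfold le; rewrite aA, aI; reflexivity. Qed.
Lemma le_addr a b : le b (add a b). Proof. unfold le; rewrite (aC a b), aA, aI; reflexivity. Qed.
Lemma le_lub a b c : le a c -> le b c -> le (add a b) c.
Proof. unfold le; intros H H0; rewrite <- aA, H0, H; reflexivity. Qed.
Lemma le_antisym a b : le a b -> le b a -> a = b.
Proof. unfold le; intros H H0. rewrite <- H, <- H0 at 1. apply aC. Qed.
Lemma le_in : forall l x y, In y (x :: l) -> le y (lprod add x l).
Proof. induction l as [|z l IH]; intros x y Hy; simpl.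
  - destruct Hy as [Hy|[]]; subst; apply le_refl.
  - destruct Hy as [Hy|Hy]. subst; apply le_addl.
    eapply le_trans. apply (IH z y Hy). apply le_addr. Qed.
Lemma lub_in : forall l x c, (forall y, In y (x :: l) -> le y c) -> le (lprod add x l) c.
Proof. induction l as [|z l IH]; intros x c H; simpl. apply H; left; auto.
  apply le_lub. apply H; left; auto. apply IH. intros y Hy; apply H; right; exact Hy. Qed.
End Semilattice.

Definition napp {A} (a b : A * list A) : A * list A := (fst a, snd a ++ fst b :: snd b).
Definition mcont {A} (a : A * list A) : list A := fst a :: snd a.

Definition pmul1 {V} (a : V * list V) (q : (V * list V) * list (V * list V)) :=
  (napp a (fst q), map (napp a) (snd q)).
Fixpoint pmulL {V} (m : V * list V) (ms : list (V * list V)) q :=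
  match ms with nil => pmul1 m q | m' :: ms' => napp (pmul1 m q) (pmulL m' ms' q) end.
Definition pmul {V} (p q : (V * list V) * list (V * list V)) := pmulL (fst p) (snd p) q.

Section Eval.
Variables (V X : Type) (add mul : X -> X -> X) (f : V -> X).
Hypothesis HS : aisemiring add mul.
Definition mev (m : V * list V) : X := lprod mul (f (fst m)) (map f (snd m)).
Definition pev (p : (V * list V) * list (V * list V)) : X :=
  lprod add (mev (fst p)) (map mev (snd p)).

Lemma mev_napp m n : mev (napp m n) = mul (mev m) (mev n).
Proof. unfold mev, napp; simpl. rewrite map_app; simpl.
  apply lprod_app. apply (ai_mul_assoc _ _ HS). Qed.
Lemma pev_napp p q : pev (napp p q) = add (pev p) (pev q).
Proof. unfold pev, napp; simpl. rewrite map_app; simpl.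
  apply lprod_app. apply (ai_add_assoc _ _ HS). Qed.
Lemma lprod_distr : forall l c x,
  lprod add (mul c x) (map (mul c) l) = mul c (lprod add x l).
Proof. induction l as [|y l IH]; intros c x; simpl; auto.
  rewrite IH, (ai_distr_l _ _ HS); reflexivity. Qed.
Lemma pev_pmul1 a q : pev (pmul1 a q) = mul (mev a) (pev q).
Proof. unfold pev, pmul1; simpl. rewrite mev_napp, map_map.
  rewrite (map_ext _ (fun x => mul (mev a) (mev x))) by (intro; apply mev_napp).
  rewrite <- (map_map mev (mul (mev a))). apply lprod_distr. Qed.
Lemma pev_pmulL : forall ms m q,
  pev (pmulL m ms q) = mul (lprod add (mev m) (map mev ms)) (pev q).
Proof. induction ms as [|m' ms IH]; intros m q; simpl.
  apply pev_pmul1. rewrite pev_napp, pev_pmul1, IH, (ai_distr_r _ _ HS); reflexivity. Qed.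
Lemma pev_pmul p q : pev (pmul p q) = mul (pev p) (pev q).
Proof. apply pev_pmulL. Qed.
Lemma pev_in u p : In u (mcont p) -> le X add (mev u) (pev p).
Proof. intro H. apply le_in. apply (ai_add_assoc _ _ HS). apply (ai_add_comm _ _ HS).
  apply (ai_add_idem _ _ HS). apply (in_map mev (mcont p) u H). Qed.
End Eval.

Lemma S4_ai : aisemiring S4add S4mul.
Proof. constructor; intros; repeat match goal with x : S4 |- _ => destruct x; clear x end; reflexivity. Qed.

Section TSide.
Variables (T : Type) (add mul : T -> T -> T).
Hypothesis HS : aisemiring add mul.
Hypothesis HSig : satisfies_Sigma add mul.

Let mA := ai_mul_assoc _ _ HS.
Let aA := ai_add_assoc _ _ HS.
Let aC := ai_add_comm _ _ HS.
Let aI := ai_add_idem _ _ HS.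
Let mC : forall x y, mul x y = mul y x. Proof. apply HSig. Qed.
Let sq : forall x y, mul (mul x x) y = mul x y. Proof. apply HSig. Qed.
Let sq2 : forall x, mul x x = add (mul x x) x. Proof. apply HSig. Qed.
Let id4 : forall x y z, add x (mul (mul x y) z) = add (add x (mul (mul x y) z)) (mul x y).
Proof. apply HSig. Qed.
Let id5 : forall x1 x2 x3 x4, add (mul x1 x2) (mul x3 x4)
      = add (add (mul x1 x2) (mul x3 x4)) (mul (mul (mul x1 x2) x3) x4).
Proof. apply HSig. Qed.

Let mxx x y : mul x (mul x y) = mul x y.
Proof. rewrite mA, sq; reflexivity. Qed.

Lemma absorb : forall l a x, l <> nil -> In x (a :: l) ->
  mul x (lprod mul a l) = lprod mul a l.
Proof.
  induction l as [|b k IH]; intros a x Hl Hx. congruence.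
  simpl lprod. destruct Hx as [Hx|Hx]. subst; apply mxx.
  destruct k as [|c k'].
  - destruct Hx as [Hx|[]]. subst. simpl. rewrite (mC a x), mxx. reflexivity.
  - rewrite mA, (mC x a), <- mA, IH; [reflexivity|congruence|exact Hx].
Qed.

Lemma incl_fold : forall k a l, l <> nil -> (forall x, In x k -> In x (a :: l)) ->
  fold_right mul (lprod mul a l) k = lprod mul a l.
Proof. induction k as [|y k IH]; intros a l Hl H; simpl; auto.
  rewrite IH; auto. apply absorb; auto. apply H; left; auto.
  intros; apply H; right; auto. Qed.

Lemma fold_lprod : forall k b z, fold_right mul z (b :: k) = mul (lprod mul b k) z.
Proof. induction k as [|c k IH]; intros b z; simpl; auto.
  simpl in IH. rewrite IH, mA; reflexivity. Qed.

Lemma content a l b k : l <> nil -> k <> nil -> incl (a :: l) (b :: k) -> incl (b :: k) (a :: l) ->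
  lprod mul a l = lprod mul b k.
Proof. intros Hl Hk H1 H2.
  assert (E1 := incl_fold (b :: k) a l Hl H2). rewrite fold_lprod in E1.
  assert (E2 := incl_fold (a :: l) b k Hk H1). rewrite fold_lprod in E2.
  transitivity (mul (lprod mul b k) (lprod mul a l)); [symmetry; exact E1 | rewrite mC; exact E2]. Qed.

Definition mevT := mev T T mul (fun x => x).
Definition pevT := pev T T add mul (fun x => x).
Notation leT := (le T add).

Lemma mevT_eq m : mevT m = lprod mul (fst m) (snd m).
Proof. unfold mevT, mev. rewrite map_id. reflexivity. Qed.

Lemma mcontent m n : snd m <> nil -> snd n <> nil -> incl (mcont m) (mcont n) ->
  incl (mcont n) (mcont m) -> mevT m = mevT n.
Proof. intros. rewrite !mevT_eq. apply content; auto. Qed.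

Lemma nl_closed m1 m2 c : leT (mevT m1) c -> leT (mevT m2) c -> snd m1 <> nil -> snd m2 <> nil ->
  leT (mevT (napp m1 m2)) c.
Proof. intros H1 H2 N1 N2. unfold mevT. rewrite (mev_napp T T add mul) by exact HS. fold mevT.
  destruct m1 as [a [|b k]]; [simpl in N1; congruence|].
  destruct m2 as [c' [|d k']]; [simpl in N2; congruence|].
  rewrite !mevT_eq in *. simpl in *.
  apply (le_trans T add aA _ (add (mul a (lprod mul b k)) (mul c' (lprod mul d k'))) _).
  - unfold le. rewrite aC, (mA (mul a _) c'). symmetry; apply id5.
  - apply le_lub; assumption.
Qed.

Lemma pevT_in u p : In u (mcont p) -> leT (mevT u) (pevT p).
Proof. apply pev_in; exact HS. Qed.

Lemma napp_nn (m n : T * list T) : snd (napp m n) <> nil.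
Proof. unfold napp; simpl. destruct (snd m); simpl; congruence. Qed.

Lemma buildW (P : (T * list T) * list (T * list T)) : forall ys,
  (exists m, In m (mcont P) /\ snd m <> nil) ->
  (forall y, In y ys -> exists m, In m (mcont P) /\ snd m <> nil /\ In y (mcont m)) ->
  exists W, snd W <> nil /\ leT (mevT W) (pevT P) /\ incl ys (mcont W).
Proof.
  induction ys as [|y ys IH]; intros [m0 [Hm0 N0]] H.
  - exists m0; split; auto. split. apply pevT_in; auto. intros z [].
  - destruct IH as [W [NW [LW IW]]]. exists m0; auto. intros; apply H; right; auto.
    destruct (H y (or_introl eq_refl)) as [m [Hm [Nm Ym]]].
    exists (napp W m). split. apply napp_nn. split.
    apply nl_closed; auto. apply pevT_in; auto.
    intros z [Hz|Hz]; unfold mcont, napp; simpl; fold (mcont W).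
    + subst. right. apply in_or_app. right. exact Ym.
    + change (In z (mcont W ++ mcont m)). apply in_or_app. left. apply IW; auto.
Qed.

Lemma core_nl u P : snd u <> nil ->
  (exists m0, In m0 (mcont P) /\ incl (mcont m0) (mcont u)) ->
  (forall y, In y (mcont u) -> exists m, In m (mcont P) /\ snd m <> nil /\ In y (mcont m)) ->
  leT (mevT u) (pevT P).
Proof.
  intros Nu [m0 [Hm0 Im0]] H.
  destruct (buildW P (mcont u)) as [W [NW [LW IW]]]; auto.
  { destruct (H (fst u) (or_introl eq_refl)) as [m [Hm [Nm _]]]; eauto. }
  assert (E1 : mul (mevT m0) (mevT u) = mevT u).
  { unfold mevT; rewrite <- (mev_napp T T add mul) by exact HS. fold mevT.
    apply mcontent; auto. apply napp_nn.
    change (incl (mcont m0 ++ mcont u) (mcont u)). apply incl_app; auto. apply incl_refl.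
    change (incl (mcont u) (mcont m0 ++ mcont u)). apply incl_appr, incl_refl. }
  assert (E2 : mul (mevT u) (mevT W) = mevT W).
  { unfold mevT; rewrite <- (mev_napp T T add mul) by exact HS. fold mevT.
    apply mcontent; auto. apply napp_nn.
    change (incl (mcont u ++ mcont W) (mcont W)). apply incl_app; auto. apply incl_refl.
    change (incl (mcont W) (mcont u ++ mcont W)). apply incl_appr, incl_refl. }
  assert (E := id4 (mevT m0) (mevT u) (mevT W)). rewrite E1, E2 in E.
  apply (le_trans T add aA _ (add (mevT m0) (mevT W)) _).
  - unfold le. rewrite aC. symmetry. exact E.
  - apply le_lub; auto. apply pevT_in; auto.
Qed.

Lemma core_lin x P :
  (exists m, In m (mcont P) /\ forall z, In z (mcont m) -> z = x) ->
  leT (mevT (x, nil)) (pevT P).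
Proof.
  intros [[a l] [Hm Hz]].
  assert (Ha : a = x) by (apply Hz; left; auto). subst a.
  destruct l as [|b k].
  - apply pevT_in; auto.
  - apply (le_trans T add aA _ (mevT (x, b :: k)) _); [|apply pevT_in; auto].
    rewrite (mcontent (x, b :: k) (x, [x])).
    + rewrite !mevT_eq; simpl. unfold le. rewrite aC. symmetry. apply sq2.
    + simpl; congruence.
    + simpl; congruence.
    + intros z Hz'. rewrite (Hz z Hz'). left; auto.
    + intros z [Hz'|[Hz'|[]]]; subst; left; auto.
Qed.
End TSide.

Section S4Side.
Variable T : Type.
Definition mevS (v : T -> S4) m := mev T S4 S4mul v m.
Definition pevS (v : T -> S4) p := pev T S4 S4add S4mul v p.
Definition Hsem (u : T * list T) (P : (T * list T) * list (T * list T)) :=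
  forall v, S4add (mevS v u) (pevS v P) = pevS v P.

Lemma S4_e4_aux : forall l a, In e4 (a :: l) ->
  lprod S4mul a l = e4 \/ lprod S4mul a l = e1 \/ lprod S4mul a l = e3.
Proof. induction l as [|b k IH]; intros a H; simpl.
  - destruct H as [H|[]]; subst; auto.
  - destruct H as [H|H].
    + subst. destruct (lprod S4mul b k); simpl; auto.
    + destruct (IH b H) as [E|[E|E]]; rewrite E; destruct a; simpl; auto.
Qed.

Lemma S4_e4 : forall l a, l <> nil -> In e4 (a :: l) ->
  lprod S4mul a l = e1 \/ lprod S4mul a l = e3.
Proof. intros [|b k] a Hl H; [congruence|]. simpl.
  destruct H as [H|H].
  + subst. destruct (lprod S4mul b k); simpl; auto.
  + destruct (S4_e4_aux k b H) as [E|[E|E]]; rewrite E; destruct a; simpl; auto.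
Qed.

Lemma mevS_in (v : T -> S4) (m : T * list T) z : In z (mcont m) -> In (v z) (v (fst m) :: map v (snd m)).
Proof. intro H. exact (in_map v (mcont m) z H). Qed.

Lemma pevS_all (R : S4 -> Prop) v P :
  (forall a b, R a -> R b -> R (S4add a b)) ->
  (forall m, In m (mcont P) -> R (mevS v m)) -> R (pevS v P).
Proof. intros HR H. unfold pevS, pev. apply lprod_all; auto. intros y Hy.
  change (In y (map (mevS v) (mcont P))) in Hy. apply in_map_iff in Hy.
  destruct Hy as [m [<- Hm]]. auto. Qed.

Definition dec (Q : Prop) (a b : S4) : S4 :=
  if excluded_middle_informative Q then a else b.

Lemma sem1 u P : snd u <> nil -> Hsem u P ->
  exists m0, In m0 (mcont P) /\ incl (mcont m0) (mcont u).
Proof.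
  intros Nu H. apply NNPP; intro Hn.
  set (v := fun z => dec (In z (mcont u)) e4 e2).
  specialize (H v).
  assert (Hu : mevS v u = e1).
  { destruct u as [a [|b k]]; [simpl in Nu; congruence|].
    unfold mevS, mev; simpl.
    assert (Hv : forall z, In z (a :: b :: k) -> v z = e4).
    { intros z Hz; unfold v, dec. destruct excluded_middle_informative; auto. contradiction. }
    assert (R : lprod S4mul (v b) (map v k) = e1 \/ lprod S4mul (v b) (map v k) = e4).
    { apply lprod_all. intros x y [->| ->] [->| ->]; simpl; auto.
      intros y Hy. change (In y (map v (b :: k))) in Hy. apply in_map_iff in Hy.
      destruct Hy as [z [<- Hz]]. right. apply Hv. right; auto. }
    rewrite (Hv a) by (left; auto). destruct R as [-> | ->]; reflexivity. }
  assert (HP : pevS v P = e2 \/ pevS v P = e3).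
  { apply pevS_all. intros x y [->| ->] [->| ->]; simpl; auto.
    intros m Hm. assert (~ incl (mcont m) (mcont u)) by eauto.
    apply not_all_ex_not in H0. destruct H0 as [z Hz].
    apply imply_to_and in Hz. destruct Hz as [Hz1 Hz2].
    unfold mevS, mev. apply (lprod_ideal S4mul (fun s => s = e2 \/ s = e3)) with (y := v z).
    - intros x y [->| ->]; destruct y; simpl; auto.
    - intros x y [->| ->]; destruct x; simpl; auto.
    - apply mevS_in; auto.
    - unfold v, dec. destruct excluded_middle_informative; [contradiction|auto]. }
  rewrite Hu in H. destruct HP as [E|E]; rewrite E in H; discriminate.
Qed.

Lemma sem2 u P : snd u <> nil -> Hsem u P ->
  forall y, In y (mcont u) -> exists m, In m (mcont P) /\ snd m <> nil /\ In y (mcont m).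
Proof.
  intros Nu H y Hy. apply NNPP; intro Hn.
  set (v := fun z => dec (z = y) e4 e2).
  specialize (H v).
  assert (Hu : mevS v u = e1 \/ mevS v u = e3).
  { destruct u as [a l]. unfold mevS, mev; simpl. apply S4_e4.
    simpl in Nu. destruct l; simpl; congruence.
    replace e4 with (v y). apply (mevS_in v (a, l) y Hy).
    unfold v, dec. destruct excluded_middle_informative; congruence. }
  assert (HP : pevS v P = e2 \/ pevS v P = e4).
  { apply pevS_all. intros x z [->| ->] [->| ->]; simpl; auto.
    intros [a l] Hm. destruct (classic (In y (mcont (a, l)))) as [Hy'|Hy'].
    - destruct l as [|b k].
      + destruct Hy' as [Hy'|[]]. subst. right. unfold mevS, mev, v, dec; simpl.
        destruct excluded_middle_informative; congruence.
      + exfalso. apply Hn. exists (a, b :: k). simpl; split; auto. split; [congruence|auto].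
    - left. unfold mevS, mev. apply (lprod_all S4mul (fun s => s = e2)).
      intros x z -> ->; reflexivity.
      intros s Hs. change (In s (map v (mcont (a, l)))) in Hs. apply in_map_iff in Hs.
      destruct Hs as [z [<- Hz]]. unfold v, dec.
      destruct excluded_middle_informative; [subst; contradiction|auto]. }
  destruct Hu as [E|E]; rewrite E in H; destruct HP as [E'|E']; rewrite E' in H; discriminate.
Qed.

Lemma sem_lin x P : Hsem (x, nil) P ->
  exists m, In m (mcont P) /\ forall z, In z (mcont m) -> z = x.
Proof.
  intros H. apply NNPP; intro Hn.
  set (v := fun z => dec (z = x) e4 e3).
  specialize (H v).
  assert (Hu : mevS v (x, nil) = e4).
  { unfold mevS, mev, v, dec; simpl. destruct excluded_middle_informative; congruence. }
  assert (HP : pevS v P = e3).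
  { apply pevS_all. intros a b -> ->; reflexivity.
    intros m Hm. assert (~ forall z, In z (mcont m) -> z = x) by eauto.
    apply not_all_ex_not in H0. destruct H0 as [z Hz].
    apply imply_to_and in Hz. destruct Hz as [Hz1 Hz2].
    unfold mevS, mev. apply (lprod_ideal S4mul (fun s => s = e3)) with (y := v z).
    - intros a b ->; reflexivity.
    - intros a b ->; destruct a; reflexivity.
    - apply mevS_in; auto.
    - unfold v, dec. destruct excluded_middle_informative; [contradiction|auto]. }
  rewrite Hu, HP in H. discriminate.
Qed.
End S4Side.

Section Completeness.
Variables (T : Type) (add mul : T -> T -> T).
Hypothesis HS : aisemiring add mul.
Hypothesis HSig : satisfies_Sigma add mul.
Let aA := ai_add_assoc _ _ HS.
Let aC := ai_add_comm _ _ HS.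
Let aI := ai_add_idem _ _ HS.

Lemma half (p q : (T * list T) * list (T * list T)) :
  (forall v, pevS T v p = pevS T v q) -> le T add (pevT T add mul q) (pevT T add mul p).
Proof.
  intros H. unfold pevT, pev. apply lub_in; auto. intros y Hy.
  change (In y (map (mevT T mul) (mcont q))) in Hy. apply in_map_iff in Hy.
  destruct Hy as [u [<- Hu]].
  assert (Hs : Hsem T u p).
  { intro v. rewrite H. apply (pev_in T S4 S4add S4mul v S4_ai u q Hu). }
  destruct u as [x [|b k]].
  - apply core_lin; auto. apply sem_lin; auto.
  - apply core_nl; auto. simpl; congruence.
    apply sem1; auto. simpl; congruence.
    apply sem2; auto. simpl; congruence.
Qed.

Lemma key (p q : (T * list T) * list (T * list T)) :
  (forall v, pevS T v p = pevS T v q) -> pevT T add mul p = pevT T add mul q.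
Proof. intro H. apply (le_antisym T add aC).
  apply half; intro v; symmetry; auto. apply half; auto. Qed.

Definition evS4 (p : (T * list T) * list (T * list T)) : (T -> S4) -> S4 :=
  fun v => pevS T v p.
Definition PP (f : (T -> S4) -> S4) : Prop := exists p, f = evS4 p.

Lemma PPadd : forall f g, PP f -> PP g -> PP (fun i => S4add (f i) (g i)).
Proof. intros f g [p ->] [q ->]. exists (napp p q). extensionality v.
  unfold evS4, pevS. rewrite (pev_napp T S4 S4add S4mul v S4_ai). reflexivity. Qed.
Lemma PPmul : forall f g, PP f -> PP g -> PP (fun i => S4mul (f i) (g i)).
Proof. intros f g [p ->] [q ->]. exists (pmul p q). extensionality v.
  unfold evS4, pevS. rewrite (pev_pmul T S4 S4add S4mul v S4_ai). reflexivity. Qed.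

Definition hh (u : {f : (T -> S4) -> S4 | PP f}) : T :=
  pevT T add mul (proj1_sig (constructive_indefinite_description _ (proj2_sig u))).

Lemma hh_spec u p : proj1_sig u = evS4 p -> hh u = pevT T add mul p.
Proof. intro E. unfold hh.
  destruct (constructive_indefinite_description _ _) as [p' Hp']; simpl.
  apply key. intro v. rewrite E in Hp'. symmetry; exact (equal_f Hp' v). Qed.

Lemma inV : InV_S4 add mul.
Proof.
  exists (T -> S4), PP, PPadd, PPmul, hh. split; [|split].
  - intro t. exists (exist _ (evS4 ((t, nil), nil)) (ex_intro _ _ eq_refl)).
    rewrite (hh_spec _ ((t, nil), nil)) by reflexivity. reflexivity.
  - intros [f [p Hp]] [g [q Hq]].
    rewrite (hh_spec (exist _ f _) p Hp), (hh_spec (exist _ g _) q Hq).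
    rewrite (hh_spec _ (napp p q)).
    apply (pev_napp T T add mul _ HS).
    simpl. subst. extensionality v. unfold evS4, pevS.
    rewrite (pev_napp T S4 S4add S4mul v S4_ai). reflexivity.
  - intros [f [p Hp]] [g [q Hq]].
    rewrite (hh_spec (exist _ f _) p Hp), (hh_spec (exist _ g _) q Hq).
    rewrite (hh_spec _ (pmul p q)).
    apply (pev_pmul T T add mul _ HS).
    simpl. subst. extensionality v. unfold evS4, pevS.
    rewrite (pev_pmul T S4 S4add S4mul v S4_ai). reflexivity.
Qed.
End Completeness.

Section Soundness.
Variables (T : Type) (add mul : T -> T -> T).
Variables (I : Type) (P : (I -> S4) -> Prop)
  (Padd : forall f g, P f -> P g -> P (fun i => S4add (f i) (g i)))
  (Pmul : forall f g, P f -> P g -> P (fun i => S4mul (f i) (g i)))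
  (h : {f : I -> S4 | P f} -> T).
Hypothesis surj : forall t : T, exists u, h u = t.
Hypothesis hadd : forall u v : {f : I -> S4 | P f},
  h (exist _ _ (Padd _ _ (proj2_sig u) (proj2_sig v))) = add (h u) (h v).
Hypothesis hmul : forall u v : {f : I -> S4 | P f},
  h (exist _ _ (Pmul _ _ (proj2_sig u) (proj2_sig v))) = mul (h u) (h v).

Lemma hext (u v : {f : I -> S4 | P f}) : proj1_sig u = proj1_sig v -> h u = h v.
Proof. destruct u as [f pf], v as [g pg]; simpl; intros ->. f_equal. f_equal.
  apply proof_irrelevance. Qed.

Ltac solve_id := repeat (rewrite <- hmul || rewrite <- hadd); apply hext; simpl;
  extensionality i;
  repeat match goal with |- context [proj1_sig ?u ?j] => destruct (proj1_sig u j) end;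
  reflexivity.

Lemma sound : satisfies_Sigma add mul.
Proof.
  split; [|split; [|split; [|split]]].
  - intros x y. destruct (surj x) as [u <-], (surj y) as [w <-]. solve_id.
  - intros x y. destruct (surj x) as [u <-], (surj y) as [w <-]. solve_id.
  - intros x. destruct (surj x) as [u <-]. solve_id.
  - intros x y z. destruct (surj x) as [u <-], (surj y) as [w <-], (surj z) as [r <-]. solve_id.
  - intros x1 x2 x3 x4. destruct (surj x1) as [u1 <-], (surj x2) as [u2 <-],
      (surj x3) as [u3 <-], (surj x4) as [u4 <-]. solve_id.
Qed.
End Soundness.

Theorem proposition6p5 (T : Type) (add mul : T -> T -> T) :
  aisemiring add mul -> (InV_S4 add mul <-> satisfies_Sigma add mul).
Proof.
  intro HS. split.
  - intros [I [P [Padd [Pmul [h [Hs [Ha Hm]]]]]]]. eapply sound; eauto.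
  - intro HSig. apply inV; auto.
Qed.
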